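(* For every integer $m \ge 2$, the imbalanced $(m,3)$-RPS game is strongly playable: in every (mixed-strategy) Nash equilibrium of this game, each of the three objects $R$, $P$, $S$ is played with positive probability by at least one player.
   Context: An $(m,n)$-RPS game is a symmetric, zero-sum, win/lose game with $m$ players and $n$ pure strategies (''objects''), played without collusion, in which each player independently chooses an object. The rules assign to every multiset $c$ of $m$ chosen objects a single winning object $\phi(c) \in c$; every player who chose $\phi(c)$ wins and every other player loses. If there are $m'$ winners, each winner receives payoff $\frac{m-m'}{m'}$ and each loser receives payoff $-1$. Players use mixed strategies (independent probability distributions over the objects), and Nash equilibria are taken in mixed strategies. The imbalanced $(m,3)$-RPS has objects $R,P,S$ with the following rules: any multiset containing at least one $S$ and at least one $R$ is won by $R$; any multiset containing only $R$'s and $P$'s (with at least one $P$ and at least one $R$) is won by $P$; any multiset containing only $P$'s and $S$'s (with at least one of each) is won by $S$; a multiset consisting of a single object type is won by that object. A game is strongly playable if in every Nash equilibrium every object is played with positive probability by at least one player. *)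

(* Defs.v *)
From HB Require Import structures.
From mathcomp Require Import all_boot all_order all_algebra.
From mathcomp Require Import reals.
Set Implicit Arguments. Unset Strict Implicit. Unset Printing Implicit Defensive.
Import Order.TTheory GRing.Theory Num.Theory.
Local Open Scope ring_scope.

Inductive obj := oR | oP | oS.

Definition obj_to (o : obj) : 'I_3 :=
  match o with oR => inord 0 | oP => inord 1 | oS => inord 2 end.
Definition obj_of (i : 'I_3) : obj :=
  match val i with 0 => oR | 1 => oP | _ => oS end.
Lemma objK : cancel obj_to obj_of.
Proof. by case; rewrite /obj_of /= inordK. Qed.

HB.instance Definition _ := Finite.copy obj (can_type objK).

(* Since the rules only depend on the multiset of chosen objects,
   we represent them as functions of the pure profile that only
   depend on which objects occur. *)
Definition pure_profile (m : nat) := {ffun 'I_m -> obj}.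

Definition occurs m (c : pure_profile m) (o : obj) : bool := [exists j, c j == o].

Definition imbalanced_winner m (c : pure_profile m) : obj :=
  let hR := occurs c oR in let hP := occurs c oP in let hS := occurs c oS in
  if hS && hR then oR
  else if hR && hP then oP
  else if hP && hS then oS
  else
    if hR then oR else if hP then oP else oS.

Definition rps_payoff (R : realType) m (phi : pure_profile m -> obj)
  (c : pure_profile m) (i : 'I_m) : R :=
  let w := phi c in
  let m' := #|[set j | c j == w]| in
  if c i == w then (m%:R - m'%:R) / m'%:R else -1.

Definition mixed_strategy (R : realType) (q : {ffun obj -> R}) : Prop :=
  (forall o, 0 <= q o) /\ \sum_o q o = 1.

Definition mixed_profile (R : realType) m := {ffun 'I_m -> {ffun obj -> R}}.

Definition is_mixed_profile (R : realType) m (p : mixed_profile R m) : Prop :=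
  forall j, mixed_strategy (p j).

Definition expected_payoff (R : realType) m (phi : pure_profile m -> obj)
  (p : mixed_profile R m) (i : 'I_m) : R :=
  \sum_(c : pure_profile m) (\prod_j p j (c j)) * rps_payoff R phi c i.

Definition deviate (R : realType) m (p : mixed_profile R m) (i : 'I_m)
  (q : {ffun obj -> R}) : mixed_profile R m :=
  [ffun j => if j == i then q else p j].

Definition nash_equilibrium (R : realType) m (phi : pure_profile m -> obj)
  (p : mixed_profile R m) : Prop :=
  is_mixed_profile p /\
  forall i (q : {ffun obj -> R}), mixed_strategy q ->
    expected_payoff phi (deviate p i q) i <= expected_payoff phi p i.

Definition strongly_playable (R : realType) m (phi : pure_profile m -> obj) : Prop :=
  forall p : mixed_profile R m, nash_equilibrium phi p ->
    forall o : obj, exists j : 'I_m, 0 < p j o.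

(* Main.v *)
Require Import Defs.
From mathcomp Require Import all_boot all_order all_algebra.
From mathcomp Require Import reals.
From mathcomp Require Import ring lra.
Set Implicit Arguments. Unset Strict Implicit. Unset Printing Implicit Defensive.
Import Order.TTheory GRing.Theory Num.Theory.
Local Open Scope ring_scope.

Definition obj_eqb (x y : obj) : bool :=
  match x, y with oR, oR | oP, oP | oS, oS => true | _, _ => false end.
Lemma eq_objE (x y : obj) : (x == y) = obj_eqb x y.
Proof. by apply/eqP/idP; case: x; case: y. Qed.
Lemma sum_obj (R : realType) (F : obj -> R) : \sum_o F o = F oR + F oP + F oS.
Proof.
rewrite (bigD1 oR) // (bigD1 oP) ?eq_objE // (bigD1 oS) ?eq_objE //.
rewrite big1 /=; first by rewrite addr0 addrA.
by case=> //; rewrite !eq_objE.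
Qed.

Definition rest (R : realType) m (p : mixed_profile R m) (i : 'I_m)
  (c : pure_profile m) : R := \prod_(j | j != i) p j (c j).

Definition Gf (R : realType) m (phi : pure_profile m -> obj) (p : mixed_profile R m)
  (i : 'I_m) (x : obj) : R :=
  \sum_(c : pure_profile m) ((c i == x)%:R * rest p i c) * rps_payoff R phi c i.

Lemma E_dev (R : realType) m phi (p : mixed_profile R m) i q :
  expected_payoff phi (deviate p i q) i = \sum_x q x * Gf phi p i x.
Proof.
rewrite /expected_payoff.
transitivity (\sum_(c : pure_profile m) q (c i) * rest p i c * rps_payoff R phi c i).
  apply: eq_bigr => c _; rewrite (bigD1 i) //= ffunE eqxx; congr (_ * _ * _).
  by apply: eq_bigr => j; rewrite ffunE => /negbTE ->.
rewrite /Gf; symmetry; under eq_bigr do rewrite mulr_sumr.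
rewrite exchange_big /=; apply: eq_bigr => c _.
rewrite (bigD1 (c i)) //= eqxx mul1r big1 ?addr0 ?mulrA //.
by move=> x; rewrite eq_sym => /negbTE ->; rewrite mul0r mul0r mulr0.
Qed.

Lemma dev_self (R : realType) m (p : mixed_profile R m) i : deviate p i (p i) = p.
Proof. by apply/ffunP => j; rewrite ffunE; case: eqP => // ->. Qed.

Lemma NE_shift (R : realType) m phi (p : mixed_profile R m) i x y :
  nash_equilibrium phi p -> x != y -> 0 < p i y -> Gf phi p i x <= Gf phi p i y.
Proof.
move=> [Hmix Hne] Hxy Hy.
pose q : {ffun obj -> R} :=
  [ffun z => if z == x then p i x + p i y else if z == y then 0 else p i z].
have [Hnn Hs] := Hmix i.
have Hq : mixed_strategy q.
  split.
    move=> z; rewrite ffunE; case: (z == x); first by apply: addr_ge0.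
    by case: (z == y).
  move: Hs; rewrite !sum_obj /q !ffunE; clear q.
  by move: Hxy Hy; case: x; case: y; rewrite !eq_objE //= => _ _; lra.
have := Hne i q Hq.
rewrite -{2}(dev_self p i) !E_dev !sum_obj /q !ffunE; clear Hq q.
have := Hnn x; have := Hnn y.
move: Hy Hxy; case: x; case: y; rewrite !eq_objE //= => ? _ ? ?; nra.
Qed.

Definition sw m (i : 'I_m) (x y : obj) (c : pure_profile m) : pure_profile m :=
  [ffun j => if j == i then (if c j == x then y else if c j == y then x else c j)
             else c j].

Lemma swK m (i : 'I_m) x y : involutive (sw i x y).
Proof.
move=> c; apply/ffunP => j; rewrite !ffunE; case: (j == i) => //.
by case: (c j); case: x; case: y; rewrite !eq_objE.
Qed.

Lemma sw_rest (R : realType) m (p : mixed_profile R m) i x y c :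
  rest p i (sw i x y c) = rest p i c.
Proof. by apply: eq_bigr => j /negbTE Hj; rewrite ffunE Hj. Qed.

Lemma sw_i m (i : 'I_m) x y c : (sw i x y c i == y) = (c i == x).
Proof. by rewrite ffunE eqxx; case: (c i); case: x; case: y; rewrite !eq_objE. Qed.

Lemma Gdiff (R : realType) m phi (p : mixed_profile R m) i x y :
  Gf phi p i x - Gf phi p i y =
  \sum_(c : pure_profile m) ((c i == x)%:R * rest p i c) *
        (rps_payoff R phi c i - rps_payoff R phi (sw i x y c) i).
Proof.
rewrite /Gf [X in _ - X](reindex_inj (inv_inj (swK i x y))) -sumrB.
by apply: eq_bigr => c _; rewrite sw_rest sw_i mulrBr.
Qed.

Lemma supp_exists (R : realType) (q : {ffun obj -> R}) :
  mixed_strategy q -> exists o, 0 < q o.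
Proof.
move=> [Hnn Hs].
case: (boolP (0 < q oR)) => [h|hR]; first by exists oR.
case: (boolP (0 < q oP)) => [h|hP]; first by exists oP.
case: (boolP (0 < q oS)) => [h|hS]; first by exists oS.
move: hR hP hS; rewrite -!leNgt; move: Hs; rewrite sum_obj; lra.
Qed.

Lemma G_pos (R : realType) m phi (p : mixed_profile R m) i x y :
  is_mixed_profile p ->
  (forall c : pure_profile m, c i = x -> (forall j, j != i -> 0 < p j (c j)) ->
     0 < rps_payoff R phi c i - rps_payoff R phi (sw i x y c) i) ->
  0 < Gf phi p i x - Gf phi p i y.
Proof.
move=> Hmix Hd; rewrite Gdiff.
pose c0 : pure_profile m :=
  [ffun j => if j == i then x else odflt x [pick o | 0 < p j o]].
have Hc0i : c0 i = x by rewrite ffunE eqxx.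
have Hc0 : forall j, j != i -> 0 < p j (c0 j).
  move=> j /negbTE Hj; rewrite ffunE Hj; case: pickP => [o Ho //|Hn].
  by have [o Ho] := supp_exists (Hmix j); move: (Hn o) => /=; rewrite Ho.
have Hpos : forall c : pure_profile m, c i = x -> (forall j, j != i -> 0 < p j (c j)) ->
    0 < rest p i c *
        (rps_payoff R phi c i - rps_payoff R phi (sw i x y c) i).
  move=> c Hci Hc; apply: mulr_gt0; last exact: Hd.
  by apply: prodr_gt0 => j; apply: Hc.
rewrite (bigD1 c0) //= {1}Hc0i eqxx mul1r; apply: (lt_le_trans (Hpos c0 Hc0i Hc0)).
rewrite lerDl; apply: sumr_ge0 => c _.
case: (c i =P x) => [Hci|_]; last by rewrite mul0r mul0r.
case: (boolP [forall j, (j != i) ==> (0 < p j (c j))]) => [/forallP Hall|].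
  rewrite mul1r; apply/ltW/(Hpos c Hci) => j Hj; by move: (Hall j); rewrite Hj.
rewrite negb_forall => /existsP [j]; rewrite negb_imply => /andP [Hj Hn].
have Hz : p j (c j) = 0.
  by apply/eqP; rewrite eq_le -leNgt in Hn *; rewrite Hn ((Hmix j).1 (c j)).
by rewrite /rest (bigD1 j) //= Hz mul0r mulr0 mul0r.
Qed.
Definition triple (o a b : obj) : Prop :=
  [\/ (o, a, b) = (oS, oP, oR), (o, a, b) = (oR, oS, oP) | (o, a, b) = (oP, oR, oS)].

Section Game.
Variables (R : realType) (m : nat).
Local Notation phi := (@imbalanced_winner m).
Local Notation pay c i := (rps_payoff R phi c i).

Lemma pay_lose (c : pure_profile m) i : c i != phi c -> pay c i = -1.
Proof. by rewrite /rps_payoff => /negbTE ->. Qed.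

Lemma pay_ge0 (c : pure_profile m) i : c i == phi c -> 0 <= pay c i.
Proof.
rewrite /rps_payoff => ->.
apply: divr_ge0; last exact: ler0n.
rewrite subr_ge0 ler_nat; have := max_card (mem [set j | c j == phi c]).
by rewrite card_ord.
Qed.

Lemma pay_gt0 (c : pure_profile m) i j : c i == phi c -> c j != phi c -> 0 < pay c i.
Proof.
move=> Hi Hj; rewrite /rps_payoff Hi.
have H1 : (0 < #|[set j | c j == phi c]|)%N.
  by apply/card_gt0P; exists i; rewrite inE Hi.
have H2 : (#|[set j | c j == phi c]| < m)%N.
  rewrite -[X in (_ < X)%N]card_ord -cardsT; apply: proper_card.
  rewrite properT; apply/eqP => E; have := in_setT j; rewrite -E inE.
  by rewrite (negbTE Hj).
apply: divr_gt0; last by rewrite ltr0n.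
by rewrite subr_gt0 ltr_nat.
Qed.

Lemma pay_zero (c : pure_profile m) i : (forall j, c j = phi c) -> pay c i = 0.
Proof.
move=> H; rewrite /rps_payoff H eqxx.
have -> : [set j | c j == phi c] = setT by apply/setP => j; rewrite !inE H eqxx.
by rewrite cardsT card_ord subrr mul0r.
Qed.

Lemma W1 o a b (c : pure_profile m) : triple o a b ->
  ~~ occurs c o -> occurs c a -> phi c = a.
Proof.
rewrite /imbalanced_winner.
case=> -[? ? ?]; subst; case: (occurs c oR); case: (occurs c oP); case: (occurs c oS) => //.
Qed.

Lemma W2 o a b (c : pure_profile m) : triple o a b ->
  ~~ occurs c o -> ~~ occurs c a -> occurs c b -> phi c = b.
Proof.
rewrite /imbalanced_winner.
case=> -[? ? ?]; subst; case: (occurs c oR); case: (occurs c oP); case: (occurs c oS) => //.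
Qed.

Lemma W3 o a b (c : pure_profile m) : triple o a b ->
  occurs c o -> occurs c a -> ~~ occurs c b -> phi c = o.
Proof.
rewrite /imbalanced_winner.
case=> -[? ? ?]; subst; case: (occurs c oR); case: (occurs c oP); case: (occurs c oS) => //.
Qed.

Lemma tri_neq o a b : triple o a b -> [/\ o != a, a != b & o != b].
Proof. by case=> -[? ? ?]; subst; rewrite !eq_objE. Qed.

Lemma tri_third o a b z : triple o a b -> z != a -> z != o -> z = b.
Proof. by case=> -[? ? ?]; subst; case: z; rewrite !eq_objE. Qed.

Lemma occursP (c : pure_profile m) j x : c j = x -> occurs c x.
Proof. by move=> H; apply/existsP; exists j; rewrite H. Qed.

Lemma noccursP (c : pure_profile m) x : (forall j, c j != x) -> ~~ occurs c x.
Proof. by move=> H; apply/existsP => -[j]; rewrite (negbTE (H j)). Qed.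

Lemma other (i : 'I_m) : (2 <= m)%N -> exists j, j != i.
Proof.
move=> hm; have h0 : (0 < m)%N by apply: leq_trans hm.
have h1 : (1 < m)%N by [].
case: (eqVneq i (Ordinal h0)) => [->|ne].
  by exists (Ordinal h1).
by exists (Ordinal h0); rewrite eq_sym.
Qed.

Lemma PL1 o a b (c : pure_profile m) i : triple o a b -> (2 <= m)%N ->
  c i = a -> (forall j, j != i -> c j != o) ->
  0 < pay c i - pay (sw i a b c) i.
Proof.
move=> Ht hm Hci Ho; have [Hoa Hab Hob] := tri_neq Ht.
have Hd : forall j, sw i a b c j = if j == i then b else c j.
  by move=> j; rewrite ffunE; case: eqP => // ->; rewrite Hci eqxx.
have Hno : forall j, c j != o.
  by move=> j; case: (eqVneq j i) => [->|/Ho //]; rewrite Hci eq_sym.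
have Wc : phi c = a by apply: (W1 Ht); [apply: noccursP | apply: (occursP Hci)].
have Hc0 : 0 <= pay c i by apply: pay_ge0; rewrite Wc Hci.
case: (boolP [exists j, (j != i) && (c j == a)]).
  move/existsP => [j /andP [Hji /eqP Hcj]].
  have Wd : phi (sw i a b c) = a.
    apply: (W1 Ht).
      apply: noccursP => k; rewrite Hd; case: (k == i) => //; by rewrite eq_sym.
    by apply: (occursP (j := j)); rewrite Hd (negbTE Hji).
  rewrite (@pay_lose (sw i a b c)); first lra.
  by rewrite Wd Hd eqxx eq_sym.
rewrite negb_exists => /forallP Hna.
have Hb : forall j, j != i -> c j = b.
  move=> j Hj; apply: (tri_third Ht); last exact: Hno.
  by move: (Hna j); rewrite Hj.
have [j Hj] := other i hm.
have Hp : 0 < pay c i.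
  by apply: (@pay_gt0 c i j); rewrite Wc ?Hci // Hb // eq_sym.
have Wd : phi (sw i a b c) = b.
  apply: (W2 Ht).
  - apply: noccursP => k; rewrite Hd; case: (k == i); [by rewrite eq_sym | exact: Hno].
  - apply: noccursP => k; rewrite Hd; case: (eqVneq k i) => [_|Hk]; first by rewrite eq_sym.
    by rewrite Hb // eq_sym.
  - by apply: (occursP (j := i)); rewrite Hd eqxx.
rewrite (@pay_zero (sw i a b c)); first lra.
by move=> k; rewrite Wd Hd; case: eqP => // /eqP Hk; rewrite Hb.
Qed.

Lemma PL2 o a b (c : pure_profile m) i : triple o a b -> (2 <= m)%N ->
  c i = o -> (forall j, j != i -> c j = a) ->
  0 < pay c i - pay (sw i o a c) i.
Proof.
move=> Ht hm Hci Ha; have [Hoa Hab Hob] := tri_neq Ht.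
have Hd : forall j, sw i o a c j = a.
  by move=> j; rewrite ffunE; case: eqP => [->|/eqP Hj]; rewrite ?Hci ?eqxx // Ha.
have [j Hj] := other i hm.
have Wc : phi c = o.
  apply: (W3 Ht); first exact: (occursP Hci).
    by apply: (occursP (j := j)); rewrite Ha.
  apply: noccursP => k; case: (eqVneq k i) => [->|/Ha ->]; first by rewrite Hci.
  by [].
have Hp : 0 < pay c i by apply: (@pay_gt0 c i j); rewrite Wc ?Hci // Ha // eq_sym.
have Wd : phi (sw i o a c) = a.
  apply: (W1 Ht); last exact: (occursP (Hd i)).
  by apply: noccursP => k; rewrite Hd eq_sym.
rewrite (@pay_zero (sw i o a c)); first lra.
by move=> k; rewrite Wd Hd.
Qed.
End Game.
Lemma main_gen (R : realType) m o a b (p : mixed_profile R m) :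
  triple o a b -> (2 <= m)%N -> nash_equilibrium (@imbalanced_winner m) p ->
  (forall j, p j o = 0) -> False.
Proof.
move=> Ht hm Hne Ho; have [Hmix _] := Hne; have [Hoa Hab Hob] := tri_neq Ht.
have Hb : forall i, p i b = 0.
  move=> i; have := (Hmix i).1 b; rewrite le_eqVlt => /orP [/eqP <- //|pos].
  exfalso.
  have H1 := NE_shift Hne Hab pos.
  have H2 : 0 < Gf (@imbalanced_winner m) p i a - Gf (@imbalanced_winner m) p i b.
    apply: G_pos => // c Hci Hc; apply: (PL1 _ Ht hm Hci) => j Hj.
    by apply/eqP => E; have := Hc j Hj; rewrite E Ho ltxx.
  lra.
have Ha : forall j, p j a = 1.
  move=> j; have := (Hmix j).2; rewrite sum_obj; have := Ho j; have := Hb j.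
  by case: Ht => -[? ? ?]; subst; lra.
have h0 : (0 < m)%N by apply: leq_trans hm.
pose i := Ordinal h0.
have pos : 0 < p i a by rewrite Ha ltr01.
have H1 := NE_shift Hne Hoa pos.
have H2 : 0 < Gf (@imbalanced_winner m) p i o - Gf (@imbalanced_winner m) p i a.
  apply: G_pos => // c Hci Hc; apply: (PL2 _ Ht hm Hci) => j Hj.
  have := Hc j Hj; case: (eqVneq (c j) a) => // Hne'.
  case: (eqVneq (c j) o) => [->|Hno]; first by rewrite Ho ltxx.
  by rewrite (tri_third Ht Hne' Hno) Hb ltxx.
lra.
Qed.

Theorem mainTheorem1 (R : realType) (m : nat) (hm : (2 <= m)%N) :
  strongly_playable R (@imbalanced_winner m).
Proof.
move=> p Hne o.
case: (boolP [exists j, 0 < p j o]) => [/existsP //|].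
rewrite negb_exists => /forallP Hno.
have Ho : forall j, p j o = 0.
  move=> j; have := Hno j; rewrite -leNgt => H.
  by apply/eqP; rewrite eq_le H ((Hne.1 j).1 o).
exfalso.
have [a [b Ht]] : exists a b, triple o a b.
  case: o {Hno Ho}.
  - by exists oS, oP; apply: Or32.
  - by exists oR, oS; apply: Or33.
  - by exists oP, oR; apply: Or31.
exact: (main_gen Ht hm Hne Ho).
Qed.
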